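(* Let $k$ be a complex number with $\Re(k)>0$. Then, as the integer $n\to\infty$, $$\int_{0}^{1}(1-u)^k\left(1-\cos 2\pi n u\right)\cot(\pi u)\,du=\frac{\gamma+\log n}{\pi}-\int_{0}^{1}(u^k-u)\cot(\pi u)\,du+o(1).$$
   Context: $\gamma$ is the Euler–Mascheroni constant. *)

(* Defs.v *)
From Stdlib Require Import Reals Lra.
Open Scope R_scope.

Definition harmonic (n : nat) : R := sum_f 1 n (fun j => / INR j).

Definition is_euler_gamma (g : R) : Prop :=
  Un_cv (fun n => harmonic n - ln (INR n)) g.

Definition improper_int01 (f : R -> R) (l : R) : Prop :=
  (forall a b, 0 < a -> a < b -> b < 1 -> inhabited (Riemann_integrable f a b)) /\
  (forall eps, 0 < eps -> exists delta, 0 < delta /\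
     forall a b (pr : Riemann_integrable f a b),
       0 < a -> a < delta -> 1 - delta < b -> b < 1 -> a < b ->
       Rabs (RiemannInt pr - l) < eps).

(* Complex power x^k for x > 0 and k = kr + i ki:
   x^k = exp(k ln x) = x^kr (cos(ki ln x) + i sin(ki ln x)). *)
Definition cpow_re (x kr ki : R) : R := Rpower x kr * cos (ki * ln x).
Definition cpow_im (x kr ki : R) : R := Rpower x kr * sin (ki * ln x).

Definition cot (x : R) : R := cos x / sin x.

Definition F_re (kr ki : R) (n : nat) (u : R) : R :=
  cpow_re (1 - u) kr ki * (1 - cos (2 * PI * INR n * u)) * cot (PI * u).
Definition F_im (kr ki : R) (n : nat) (u : R) : R :=
  cpow_im (1 - u) kr ki * (1 - cos (2 * PI * INR n * u)) * cot (PI * u).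

Definition G_re (kr ki : R) (u : R) : R :=
  (cpow_re u kr ki - u) * cot (PI * u).
Definition G_im (kr ki : R) (u : R) : R :=
  cpow_im u kr ki * cot (PI * u).

(* Main.v *)
Require Import Defs.
From Stdlib Require Import Reals Lra Lia Psatz.
From Coquelicot Require Import Coquelicot.
Open Scope R_scope.


Lemma sin_le_id x : 0 <= x -> sin x <= x.
Proof.
  intros Hx. destruct (Rle_lt_dec x PI) as [H|H].
  - destruct (sin_bound x 0 Hx H) as [_ H2]. unfold sin_approx in H2.
    cbn [sum_f_R0 Nat.mul Nat.add] in H2. unfold sin_term in H2.
    rewrite !INR_IZR_INZ in H2. cbn in H2.
    assert (HP : PI <= 4) by (pose proof PI_4; lra).
    assert (x*x <= 16) by nra.
    eapply Rle_trans; [exact H2|].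
    assert (0 <= x*x*x) by (repeat apply Rmult_le_pos; lra).
    nra.
  - pose proof (SIN_bound x). pose proof PI2_3_2. lra.
Qed.

Lemma Rabs_sin_le x : Rabs (sin x) <= Rabs x.
Proof.
  destruct (Rle_lt_dec 0 x) as [H|H].
  - rewrite (Rabs_right x) by lra.
    destruct (Rle_lt_dec x PI) as [H1|H1].
    + rewrite Rabs_right. now apply sin_le_id. apply Rle_ge, sin_ge_0; lra.
    + pose proof (SIN_bound x). pose proof PI2_3_2. apply Rabs_le; lra.
  - rewrite <- Rabs_Ropp, <- sin_neg, <- (Rabs_Ropp x).
    rewrite (Rabs_right (-x)) by lra.
    destruct (Rle_lt_dec (-x) PI) as [H1|H1].
    + rewrite Rabs_right. apply sin_le_id; lra. apply Rle_ge, sin_ge_0; lra.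
    + pose proof (SIN_bound (-x)). pose proof PI2_3_2. apply Rabs_le; lra.
Qed.

Lemma Rabs_cos1_le x : Rabs (cos x - 1) <= Rabs x.
Proof.
  replace x with (2 * (x/2)) at 1 by field.
  rewrite cos_2a_sin.
  replace (1 - 2 * sin (x/2) * sin (x/2) - 1) with (- (2 * (sin (x/2) * sin (x/2)))) by ring.
  rewrite Rabs_Ropp.
  pose proof (Rabs_sin_le (x/2)). pose proof (SIN_bound (x/2)).
  assert (Rabs (sin (x/2) * sin (x/2)) <= Rabs (sin (x/2))).
  { rewrite Rabs_mult. assert (Rabs (sin (x/2)) <= 1) by (apply Rabs_le; lra).
    pose proof (Rabs_pos (sin (x/2))). nra. }
  rewrite Rabs_mult, (Rabs_right 2) by lra.
  assert (Rabs (x/2) = Rabs x / 2).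
  { unfold Rdiv. rewrite Rabs_mult, (Rabs_right (/2)) by lra. reflexivity. }
  lra.
Qed.

Lemma ln_le_sub1 y : 0 < y -> ln y <= y - 1.
Proof. intros. pose proof (exp_ineq1_le (ln y)). rewrite exp_ln in H0 by lra. lra. Qed.

Lemma ln_near1 x : 1/2 <= x <= 1 -> Rabs (ln x) <= 2 * (1 - x).
Proof.
  intros Hx. assert (ln x <= 0).
  { destruct (Req_dec x 1). subst. rewrite ln_1; lra. left. rewrite <- ln_1. apply ln_increasing; lra. }
  rewrite Rabs_left1 by lra.
  pose proof (ln_le_sub1 (/x)). rewrite ln_Rinv in H0 by lra.
  assert (/ x - 1 <= 2 * (1 - x)).
  { apply Rmult_le_reg_l with x. lra. field_simplify; try lra. nra. }
  specialize (H0 ltac:(apply Rinv_0_lt_compat; lra)). lra.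
Qed.

Lemma exp_mono a b : a <= b -> exp a <= exp b.
Proof. intros [H|H]. left; now apply exp_increasing. subst; lra. Qed.

Lemma rpow_le1 x y : 0 < x <= 1 -> 0 <= y -> Rpower x y <= 1.
Proof. intros. unfold Rpower. rewrite <- exp_0. apply exp_mono.
  assert (ln x <= 0). { destruct (Req_dec x 1). subst. rewrite ln_1; lra. left. rewrite <- ln_1. apply ln_increasing; lra. }
  nra.
Qed.

Lemma rpow_ge1 x y : 0 < x <= 1 -> y <= 0 -> 1 <= Rpower x y.
Proof. intros. unfold Rpower. rewrite <- exp_0. apply exp_mono.
  assert (ln x <= 0). { destruct (Req_dec x 1). subst. rewrite ln_1; lra. left. rewrite <- ln_1. apply ln_increasing; lra. }
  nra.
Qed.

Lemma rpow_exp_anti x y z : 0 < x <= 1 -> y <= z -> Rpower x z <= Rpower x y.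
Proof. intros. unfold Rpower. apply exp_mono.
  assert (ln x <= 0). { destruct (Req_dec x 1). subst. rewrite ln_1; lra. left. rewrite <- ln_1. apply ln_increasing; lra. }
  nra.
Qed.

Lemma rpow_pos x y : 0 < Rpower x y.
Proof. unfold Rpower. apply exp_pos. Qed.

Lemma rpow_near1 x k : 1/2 <= x <= 1 -> 0 <= k -> Rabs (Rpower x k - 1) <= 2 * k * (1 - x).
Proof.
  intros Hx Hk. pose proof (ln_near1 x Hx).
  assert (ln x <= 0). { destruct (Req_dec x 1). subst. rewrite ln_1; lra. left. rewrite <- ln_1. apply ln_increasing; lra. }
  unfold Rpower. pose proof (exp_ineq1_le (k * ln x)).
  assert (exp (k * ln x) <= 1). { rewrite <- exp_0. apply exp_mono. nra. }
  rewrite Rabs_left1 by lra. rewrite Rabs_left1 in H by lra. nra.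
Qed.

Lemma sin_lower x : 0 <= x <= PI/2 -> x / 4 <= sin x.
Proof.
  intros Hx. assert (HP: PI <= 4) by (pose proof PI_4; lra).
  destruct (sin_bound x 0) as [H1 _]; try lra.
  unfold sin_approx in H1. cbn [sum_f_R0 Nat.mul Nat.add] in H1. unfold sin_term in H1.
  rewrite !INR_IZR_INZ in H1. cbn in H1.
  assert (x <= 2) by lra.
  assert (x*x <= 4) by nra.
  eapply Rle_trans; [|exact H1].
  assert (0 <= x*x*x) by (repeat apply Rmult_le_pos; lra).
  nra.
Qed.

Lemma sin_pi_lower u : 0 < u <= 1/2 -> u / 2 <= sin (PI * u).
Proof.
  intros Hu. pose proof PI2_3_2. pose proof (sin_lower (PI*u)). 
  assert (PI * u <= PI/2) by nra. specialize (H0 ltac:(split; nra)). nra.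
Qed.

Lemma sin_pi_lower1 u : 1/2 <= u < 1 -> (1 - u)/2 <= sin (PI * u).
Proof.
  intros Hu. replace (PI * u) with (PI - PI * (1-u)) by ring. rewrite sin_PI_x.
  apply sin_pi_lower; lra.
Qed.

Lemma cot_bound0 u : 0 < u <= 1/2 -> Rabs (cot (PI * u)) <= 2 / u.
Proof.
  intros Hu. pose proof (sin_pi_lower u Hu). unfold cot. unfold Rdiv.
  rewrite Rabs_mult, Rabs_inv, (Rabs_right (sin _)) by lra.
  pose proof (COS_bound (PI*u)). assert (Rabs (cos (PI*u)) <= 1) by (apply Rabs_le; lra).
  assert (/ sin (PI*u) <= / (u/2)) by (apply Rinv_le_contravar; lra).
  replace (2 * / u) with (/(u/2)) by (field; lra).
  assert (0 < / sin (PI*u)) by (apply Rinv_0_lt_compat; lra).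
  pose proof (Rabs_pos (cos (PI*u))). nra.
Qed.

Lemma cot_bound1 u : 1/2 <= u < 1 -> Rabs (cot (PI * u)) <= 2 / (1 - u).
Proof.
  intros Hu. pose proof (sin_pi_lower1 u Hu). unfold cot. unfold Rdiv.
  rewrite Rabs_mult, Rabs_inv, (Rabs_right (sin _)) by lra.
  pose proof (COS_bound (PI*u)). assert (Rabs (cos (PI*u)) <= 1) by (apply Rabs_le; lra).
  assert (/ sin (PI*u) <= / ((1-u)/2)) by (apply Rinv_le_contravar; lra).
  replace (2 * / (1-u)) with (/((1-u)/2)) by (field; lra).
  assert (0 < / sin (PI*u)) by (apply Rinv_0_lt_compat; lra).
  pose proof (Rabs_pos (cos (PI*u))). nra.
Qed.


Lemma exd_cont (f : R -> R) x : ex_derive f x -> continuous f x.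
Proof. apply (@ex_derive_continuous R_AbsRing R_NormedModule). Qed.

Lemma cont_rpow y x : 0 < x -> continuous (fun t => Rpower t y) x.
Proof. intros Hx. apply exd_cont. exists (y * Rpower x (y-1)).
  apply is_derive_Reals, derivable_pt_lim_power; lra. Qed.

Lemma is_RInt_rpow a b p : 0 < a <= b -> 0 < p ->
  is_RInt (fun t => Rpower t (p-1)) a b ((Rpower b p - Rpower a p)/p).
Proof.
  intros Hab Hp.
  assert (H := is_RInt_derive (fun t => /p * Rpower t p) (fun t => Rpower t (p-1)) a b).
  replace ((Rpower b p - Rpower a p)/p) with (minus (/p * Rpower b p) (/p * Rpower a p)).
  2:{ unfold minus, plus, opp; simpl. field. lra. }
  apply H.
  - intros x Hx. rewrite Rmin_left, Rmax_right in Hx by lra.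
    apply is_derive_Reals.
    replace (Rpower x (p-1)) with (/p * (p * Rpower x (p-1))) by (field; lra).
    apply (derivable_pt_lim_scal (fun t => Rpower t p)).
    apply derivable_pt_lim_power; lra.
  - intros x Hx. rewrite Rmin_left, Rmax_right in Hx by lra. apply cont_rpow; lra.
Qed.

Lemma ex_RInt_cont (f : R -> R) a b : a <= b -> (forall x, a <= x <= b -> continuous f x) -> ex_RInt f a b.
Proof. intros Hab H. apply (@ex_RInt_continuous R_CompleteNormedModule). intros z Hz.
  rewrite Rmin_left, Rmax_right in Hz by lra. now apply H. Qed.

Lemma Chasles (f : R -> R) a b c : ex_RInt f a b -> ex_RInt f b c -> RInt f a b + RInt f b c = RInt f a c.
Proof. intros. exact (RInt_Chasles f a b c H H0). Qed.

Lemma tail_bound (f : R -> R) M p a a' : 0 < p -> 0 < a <= a' ->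
  (forall x, a <= x <= a' -> continuous f x) ->
  (forall x, a <= x <= a' -> Rabs (f x) <= M * Rpower x (p-1)) ->
  Rabs (RInt f a a') <= M * (Rpower a' p - Rpower a p) / p.
Proof.
  intros Hp Ha Hc Hb.
  eapply Rle_trans. apply abs_RInt_le. lra. apply ex_RInt_cont; [lra|exact Hc].
  assert (Hi : is_RInt (fun t => M * Rpower t (p-1)) a a' (M * ((Rpower a' p - Rpower a p)/p))).
  { apply (is_RInt_scal (fun t => Rpower t (p-1)) a a' M). now apply is_RInt_rpow. }
  replace (M * (Rpower a' p - Rpower a p) / p) with (RInt (fun t => M * Rpower t (p-1)) a a').
  2:{ rewrite (is_RInt_unique _ _ _ _ Hi). simpl. field. lra. }
  apply RInt_le. lra.
  - apply ex_RInt_cont. lra. intros x Hx. apply continuous_Rabs_comp. now apply Hc.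
  - eexists; exact Hi.
  - intros x Hx. apply Hb. lra.
Qed.

Lemma rpow_small p eta : 0 < p -> 0 < eta -> exists d, 0 < d /\ forall a, 0 < a < d -> Rpower a p < eta.
Proof.
  intros Hp He. exists (Rpower eta (/p)). split. apply exp_pos.
  intros a Ha. replace eta with (Rpower (Rpower eta (/p)) p) at 1.
  apply Rlt_Rpower_l; lra.
  rewrite Rpower_mult. replace (/p * p) with 1 by (field; lra). apply Rpower_1; lra.
Qed.

Lemma diff0 (f : R -> R) M p c x y : 0 < p -> 0 < x <= y -> y <= c ->
  (forall t, 0 < t <= c -> continuous f t) ->
  (forall t, 0 < t <= c -> Rabs (f t) <= M * Rpower t (p-1)) ->
  Rabs (RInt f x c - RInt f y c) <= M * Rpower y p / p.
Proof.
  intros Hp Hxy Hyc Hc Hb.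
  assert (HM : 0 <= M).
  { specialize (Hb y ltac:(lra)). pose proof (Rabs_pos (f y)). pose proof (rpow_pos y (p-1)). nra. }
  rewrite <- (Chasles f x y c).
  2:{ apply ex_RInt_cont. lra. intros; apply Hc; lra. }
  2:{ apply ex_RInt_cont. lra. intros; apply Hc; lra. }
  assert (E : forall u v : R, u + v - v = u) by (intros; ring). rewrite E.
  eapply Rle_trans. apply (tail_bound f M p). lra. lra. intros; apply Hc; lra. intros; apply Hb; lra.
  pose proof (rpow_pos x p).
  unfold Rdiv. apply Rmult_le_compat_r. left; apply Rinv_0_lt_compat; lra. nra.
Qed.

Lemma os0 (f : R -> R) M p c : 0 < p -> 0 < c ->
  (forall t, 0 < t <= c -> continuous f t) ->
  (forall t, 0 < t <= c -> Rabs (f t) <= M * Rpower t (p-1)) ->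
  {l | forall a, 0 < a <= c -> Rabs (l - RInt f a c) <= M * Rpower a p / p}.
Proof.
  intros Hp Hc Hcont Hb.
  assert (HM : 0 <= M).
  { specialize (Hb c ltac:(lra)). pose proof (Rabs_pos (f c)). pose proof (rpow_pos c (p-1)). nra. }
  set (am := fun m : nat => c / (INR m + 1)).
  assert (Ham : forall m, 0 < am m <= c).
  { intros m. unfold am. pose proof (pos_INR m). split. apply Rdiv_lt_0_compat; lra.
    apply Rmult_le_reg_r with (INR m + 1). lra. field_simplify; nra. }
  assert (Hmono : forall m k, (m <= k)%nat -> am k <= am m).
  { intros m k Hmk. unfold am. apply le_INR in Hmk. unfold Rdiv. apply Rmult_le_compat_l. lra.
    apply Rinv_le_contravar. pose proof (pos_INR m). lra. lra. }
  assert (Hsmall : forall eta, 0 < eta -> exists N, forall m, (N <= m)%nat -> Rpower (am m) p < eta).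
  { intros eta He. destruct (rpow_small p eta Hp He) as [d [Hd Hd']].
    destruct (archimed_cor1 (d / c)) as [N [HN1 HN2]]. apply Rdiv_lt_0_compat; lra.
    exists N. intros m Hm. apply Hd'. split. apply Ham.
    unfold am. apply le_INR in Hm. apply lt_INR in HN2. simpl in HN2.
    apply Rmult_lt_reg_r with (/c). apply Rinv_0_lt_compat; lra.
    replace (c / (INR m + 1) * / c) with (/ (INR m + 1)) by (field; lra).
    eapply Rle_lt_trans; [|exact HN1]. apply Rinv_le_contravar; lra. }
  set (s := fun m => RInt f (am m) c).
  assert (Hcau : Cauchy_crit s).
  { intros eps He.
    destruct (Hsmall (eps * p / (M+1))) as [N HN].
    { apply Rdiv_lt_0_compat. nra. lra. }
    exists N. intros n m Hn Hm. unfold R_dist, s.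
    assert (Hk : forall n m, (N <= n)%nat -> (n <= m)%nat -> Rabs (RInt f (am m) c - RInt f (am n) c) < eps).
    { intros n0 m0 Hn0 Hm0. eapply Rle_lt_trans. apply (diff0 f M p c). lra.
      split. apply Ham. now apply Hmono. apply Ham. exact Hcont. exact Hb.
      specialize (HN n0 Hn0). pose proof (rpow_pos (am n0) p).
      apply Rmult_lt_reg_r with (p/(M+1)). apply Rdiv_lt_0_compat; lra.
      replace (M * Rpower (am n0) p / p * (p / (M + 1))) with (Rpower (am n0) p * (M/(M+1))) by (field; lra).
      replace (eps * (p / (M + 1))) with (eps * p / (M+1)) by (field; lra).
      assert (M / (M+1) <= 1). { apply Rmult_le_reg_r with (M+1). lra. field_simplify; lra. }
      assert (0 <= M/(M+1)) by (apply Rdiv_le_0_compat; lra). nra. }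
    destruct (Nat.le_ge_cases n m).
    - rewrite <- Rabs_Ropp. replace (- (RInt f (am n) c - RInt f (am m) c)) with (RInt f (am m) c - RInt f (am n) c) by ring.
      apply Hk; lia.
    - apply Hk; lia. }
  destruct (Rcomplete.R_complete s Hcau) as [l Hl].
  exists l. intros a Ha.
  apply Rle_plus_epsilon. intros eps He.
  destruct (Hl eps He) as [N1 HN1].
  destruct (archimed_cor1 (a / c)) as [N2 [HN2 HN2']]. apply Rdiv_lt_0_compat; lra.
  set (m := max N1 N2).
  assert (Hma : am m <= a).
  { unfold am. apply Rmult_le_reg_r with (/c). apply Rinv_0_lt_compat; lra.
    replace (c / (INR m + 1) * / c) with (/ (INR m + 1)) by (field; pose proof (pos_INR m); lra).
    replace (a * / c) with (a / c) by reflexivity.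
    left. eapply Rle_lt_trans; [|exact HN2]. apply Rinv_le_contravar. apply lt_0_INR; lia.
    assert (INR N2 <= INR m) by (apply le_INR; lia). lra. }
  specialize (HN1 m ltac:(lia)). unfold R_dist, s in HN1.
  pose proof (diff0 f M p c (am m) a Hp ltac:(split; [apply Ham|exact Hma]) ltac:(lra) Hcont Hb).
  replace (l - RInt f a c) with ((RInt f (am m) c - RInt f a c) - (RInt f (am m) c - l)) by ring.
  eapply Rle_trans. apply Rabs_triang. rewrite Rabs_Ropp. lra.
Qed.


Definition cont01 (f : R -> R) := forall x, 0 < x < 1 -> continuous f x.

Lemma cont_refl (f : R -> R) x : continuous f (1 - x) -> continuous (fun u => f (1 - u)) x.
Proof.
  intros H. apply (continuous_comp (fun u : R => 1 - u) f). 2: exact H.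
  apply exd_cont. auto_derive. auto.
Qed.

Ltac req := match goal with |- @eq _ ?x ?y => change (@eq R x y) end.
Lemma RInt_scal' (f : R -> R) c a b : ex_RInt f a b ->
  RInt (fun x => c * f x) a b = c * RInt f a b.
Proof. intros. exact (RInt_scal f a b c H). Qed.
Lemma RInt_refl (f : R -> R) a b : ex_RInt f (1-b) (1-a) ->
  RInt (fun u => f (1 - u)) a b = RInt f (1-b) (1-a).
Proof.
  intros H.
  assert (H1 : ex_RInt f (-1 * a + 1) (-1 * b + 1)).
  { replace (-1*a+1) with (1-a) by ring. replace (-1*b+1) with (1-b) by ring. apply (ex_RInt_swap f). exact H. }
  assert (E : RInt (fun y => -1 * f (-1 * y + 1)) a b = RInt f (-1 * a + 1) (-1 * b + 1))
    by exact (RInt_comp_lin f (-1) 1 a b H1).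
  assert (Hex : ex_RInt (fun y => -1 * (f (-1 * y + 1))) a b) by (exact (ex_RInt_comp_lin f (-1) 1 a b H1)).
  assert (E3 : - RInt f (-1 * a + 1) (-1 * b + 1) = RInt f (-1 * b + 1) (-1 * a + 1)) by exact (opp_RInt_swap f _ _ H1).
  transitivity (RInt (fun y => -1 * (-1 * f (-1 * y + 1))) a b).
  { apply RInt_ext. intros x _. replace (-1*x+1) with (1-x) by ring.
    assert (T: forall t : R, t = -1 * (-1 * t)) by (intros; ring). apply T. }
  rewrite (RInt_scal' (fun y => -1 * f (-1 * y + 1))) by exact Hex.
  rewrite E. replace (1 - b) with (-1 * b + 1) by ring. replace (1 - a) with (-1 * a + 1) by ring.
  rewrite <- E3. req. ring.
Qed.

Lemma RInt_plus' (f g : R -> R) a b : ex_RInt f a b -> ex_RInt g a b ->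
  RInt (fun x => f x + g x) a b = RInt f a b + RInt g a b.
Proof. intros. exact (RInt_plus f g a b H H0). Qed.



Lemma imp_exists (f : R -> R) M p : 0 < p -> cont01 f ->
  (forall x, 0 < x <= 1/2 -> Rabs (f x) <= M * Rpower x (p-1)) ->
  (forall x, 1/2 <= x < 1 -> Rabs (f x) <= M * Rpower (1-x) (p-1)) ->
  {l | forall a b, 0 < a <= 1/2 -> 1/2 <= b < 1 ->
       Rabs (l - RInt f a b) <= M * Rpower a p / p + M * Rpower (1-b) p / p}.
Proof.
  intros Hp Hc Hb0 Hb1.
  destruct (os0 f M p (1/2) Hp ltac:(lra)) as [l0 H0].
  { intros t Ht. apply Hc; lra. }
  { exact Hb0. }
  destruct (os0 (fun u => f (1-u)) M p (1/2) Hp ltac:(lra)) as [l1 H1].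
  { intros t Ht. apply cont_refl. apply Hc; lra. }
  { intros t Ht. replace t with (1 - (1 - t)) at 2 by ring. apply Hb1; lra. }
  exists (l0 + l1). intros a b Ha Hb.
  specialize (H0 a Ha). specialize (H1 (1-b) ltac:(lra)).
  rewrite RInt_refl in H1.
  2:{ apply ex_RInt_cont. lra. intros; apply Hc; lra. }
  replace (1 - (1-b)) with b in H1 by ring. replace (1 - 1/2) with (1/2) in H1 by field.
  rewrite <- (Chasles f a (1/2) b).
  2:{ apply ex_RInt_cont. lra. intros; apply Hc; lra. }
  2:{ apply ex_RInt_cont. lra. intros; apply Hc; lra. }
  replace (l0 + l1 - (RInt f a (1/2) + RInt f (1/2) b)) with ((l0 - RInt f a (1/2)) + (l1 - RInt f (1/2) b)) by ring.
  eapply Rle_trans. apply Rabs_triang. lra.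
Qed.

Definition imp01 (f : R -> R) (l : R) : Prop :=
  (forall a b, 0 < a -> a < b -> b < 1 -> ex_RInt f a b) /\
  (forall eps, 0 < eps -> exists delta, 0 < delta /\
     forall a b, 0 < a -> a < delta -> 1 - delta < b -> b < 1 -> a < b ->
       Rabs (RInt f a b - l) < eps).

Lemma imp01_improper f l : imp01 f l -> improper_int01 f l.
Proof.
  intros [H1 H2]. split.
  - intros a b Ha Hab Hb. constructor. apply ex_RInt_Reals_0. now apply H1.
  - intros eps He. destruct (H2 eps He) as [d [Hd Hd']]. exists d. split. exact Hd.
    intros a b pr Ha Had Hbd Hb Hab. rewrite <- RInt_Reals. now apply Hd'.
Qed.

Lemma qimp_imp01 (f : R -> R) K p l : 0 < p -> cont01 f ->
  (forall a b, 0 < a <= 1/2 -> 1/2 <= b < 1 -> Rabs (l - RInt f a b) <= K * Rpower a p + K * Rpower (1-b) p) ->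
  imp01 f l.
Proof.
  intros Hp Hc Hq. split.
  - intros a b Ha Hab Hb. apply ex_RInt_cont. lra. intros; apply Hc; lra.
  - intros eps He.
    destruct (rpow_small p (eps / (2 * (Rabs K + 1))) Hp) as [d [Hd Hd']].
    { apply Rdiv_lt_0_compat. lra. pose proof (Rabs_pos K). lra. }
    exists (Rmin d (1/2)). split. apply Rmin_pos; lra.
    intros a b Ha Had Hbd Hb Hab.
    assert (Had1 := Rmin_l d (1/2)). assert (Had2 := Rmin_r d (1/2)).
    rewrite <- Rabs_Ropp. replace (- (RInt f a b - l)) with (l - RInt f a b) by ring.
    eapply Rle_lt_trans. apply Hq; lra.
    pose proof (Hd' a ltac:(lra)). pose proof (Hd' (1-b) ltac:(lra)).
    pose proof (rpow_pos a p). pose proof (rpow_pos (1-b) p).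
    assert (HK : K <= Rabs K) by apply Rle_abs. pose proof (Rabs_pos K).
    assert (K * Rpower a p <= Rabs K * Rpower a p) by nra.
    assert (K * Rpower (1-b) p <= Rabs K * Rpower (1-b) p) by nra.
    assert (Rabs K * Rpower a p <= Rabs K * (eps / (2 * (Rabs K + 1)))) by nra.
    assert (Rabs K * Rpower (1-b) p <= Rabs K * (eps / (2 * (Rabs K + 1)))) by nra.
    assert (Rabs K * (eps / (2 * (Rabs K + 1))) < eps / 2).
    { apply Rmult_lt_reg_r with (2 * (Rabs K + 1)). lra. field_simplify; lra. }
    lra.
Qed.

Lemma imp01_ext (f g : R -> R) l : (forall x, 0 < x < 1 -> f x = g x) -> imp01 f l -> imp01 g l.
Proof.
  intros He [H1 H2]. split.
  - intros a b Ha Hab Hb. apply (ex_RInt_ext f). intros x Hx.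
    rewrite Rmin_left, Rmax_right in Hx by lra. apply He; lra. now apply H1.
  - intros eps Heps. destruct (H2 eps Heps) as [d [Hd Hd']]. exists d. split; auto.
    intros a b Ha Had Hbd Hb Hab. rewrite <- (RInt_ext f). now apply Hd'.
    intros x Hx. rewrite Rmin_left, Rmax_right in Hx by lra. apply He; lra.
Qed.

Lemma imp01_plus f g l1 l2 : imp01 f l1 -> imp01 g l2 -> imp01 (fun x => f x + g x) (l1 + l2).
Proof.
  intros [F1 F2] [G1 G2]. split.
  - intros a b Ha Hab Hb. apply (ex_RInt_plus f g); auto.
  - intros eps He. destruct (F2 (eps/2)) as [d1 [Hd1 Hd1']]. lra.
    destruct (G2 (eps/2)) as [d2 [Hd2 Hd2']]. lra.
    exists (Rmin d1 d2). split. now apply Rmin_pos.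
    intros a b Ha Had Hbd Hb Hab.
    assert (Had1 := Rmin_l d1 d2). assert (Had2 := Rmin_r d1 d2).
    rewrite RInt_plus'; auto.
    specialize (Hd1' a b Ha ltac:(lra) ltac:(lra) Hb Hab).
    specialize (Hd2' a b Ha ltac:(lra) ltac:(lra) Hb Hab).
    replace (RInt f a b + RInt g a b - (l1 + l2)) with ((RInt f a b - l1) + (RInt g a b - l2)) by ring.
    eapply Rle_lt_trans. apply Rabs_triang. lra.
Qed.

Lemma imp01_scal f c l : imp01 f l -> imp01 (fun x => c * f x) (c * l).
Proof.
  intros [F1 F2]. split.
  - intros a b Ha Hab Hb. apply (ex_RInt_scal f); auto.
  - intros eps He. destruct (F2 (eps / (Rabs c + 1))) as [d [Hd Hd']].
    apply Rdiv_lt_0_compat. lra. pose proof (Rabs_pos c); lra.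
    exists d. split; auto. intros a b Ha Had Hbd Hb Hab.
    rewrite RInt_scal'; auto.
    specialize (Hd' a b Ha Had Hbd Hb Hab).
    replace (c * RInt f a b - c * l) with (c * (RInt f a b - l)) by ring.
    rewrite Rabs_mult. pose proof (Rabs_pos c). pose proof (Rabs_pos (RInt f a b - l)).
    assert (Rabs c * Rabs (RInt f a b - l) <= Rabs c * (eps / (Rabs c + 1))) by nra.
    assert (Rabs c * (eps / (Rabs c + 1)) < eps).
    { apply Rmult_lt_reg_r with (Rabs c + 1). lra. field_simplify; lra. }
    lra.
Qed.

Lemma imp01_refl f l : cont01 f -> imp01 f l -> imp01 (fun u => f (1 - u)) l.
Proof.
  intros Hc [F1 F2]. split.
  - intros a b Ha Hab Hb. apply ex_RInt_cont. lra. intros x Hx. apply cont_refl. apply Hc; lra.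
  - intros eps He. destruct (F2 eps He) as [d [Hd Hd']]. exists d. split; auto.
    intros a b Ha Had Hbd Hb Hab. rewrite RInt_refl. apply Hd'; lra.
    apply ex_RInt_cont. lra. intros; apply Hc; lra.
Qed.


Lemma cont_cos_lin lam x : continuous (fun u => cos (lam * u)) x.
Proof. apply exd_cont. auto_derive. auto. Qed.

Lemma cont_mult (f g : R -> R) x : continuous f x -> continuous g x -> continuous (fun u => f u * g u) x.
Proof. intros. apply (continuous_mult f g x); auto. Qed.

Lemma cont_minus (f g : R -> R) x : continuous f x -> continuous g x -> continuous (fun u => f u - g u) x.
Proof. intros. apply (continuous_minus f g x); auto. Qed.

Lemma cont_const (c x : R) : continuous (fun _ => c) x.
Proof. apply (@continuous_const R_UniformSpace R_UniformSpace). Qed.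

Lemma int_cos lam c d : 0 < lam -> Rabs (RInt (fun u => cos (lam * u)) c d) <= 2 / lam.
Proof.
  intros Hl.
  assert (H : is_RInt (fun u => cos (lam * u)) c d (minus (sin (lam * d) / lam) (sin (lam * c) / lam))).
  { apply (is_RInt_derive (fun u => sin (lam * u) / lam)).
    - intros x _. auto_derive. auto. field. lra.
    - intros x _. apply cont_cos_lin. }
  rewrite (is_RInt_unique _ _ _ _ H). unfold minus, plus, opp; simpl.
  replace (sin (lam * d) / lam + - (sin (lam * c) / lam)) with ((sin (lam*d) - sin (lam*c)) * / lam) by (field; lra).
  rewrite Rabs_mult, Rabs_inv, (Rabs_right lam) by lra.
  pose proof (SIN_bound (lam*d)). pose proof (SIN_bound (lam*c)).
  assert (Rabs (sin (lam*d) - sin (lam*c)) <= 2) by (apply Rabs_le; lra).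
  unfold Rdiv. apply Rmult_le_compat_r. left; apply Rinv_0_lt_compat; lra. exact H2.
Qed.

Lemma RL_compact (f : R -> R) a b : a <= b -> (forall x, a <= x <= b -> continuous f x) ->
  forall eps, 0 < eps -> exists L, 0 < L /\ forall lam, L <= lam ->
    Rabs (RInt (fun u => f u * cos (lam * u)) a b) < eps.
Proof.
  intros Hab Hc eps He.
  destruct (continuity_ab_maj (fun x => Rabs (f x)) a b Hab) as [xm [HM Hxm]].
  { intros x Hx. apply continuity_pt_filterlim. apply continuous_Rabs_comp. now apply Hc. }
  set (M := Rabs (f xm)). assert (HM0 : 0 <= M) by apply Rabs_pos.
  set (e' := eps / (2 * (b - a + 1))).
  assert (He' : 0 < e') by (apply Rdiv_lt_0_compat; lra).
  destruct (unifcont_1d f a b Hc (mkposreal e' He')) as [[d Hd] Hud]. simpl in Hud.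
  assert (Hu : forall x y, a <= x <= b -> a <= y <= b -> Rabs (y - x) < d -> Rabs (f y - f x) <= e').
  { intros x y Hx Hy Hxy. specialize (Hud x y Hx Hy).
    destruct (Rle_lt_dec (Rabs (f y - f x)) e') as [Hle|Hlt]. exact Hle. exfalso. apply Hud.
    - exact Hxy.
    - intros Hb. apply (Rlt_irrefl e'). unfold ball in Hb; simpl in Hb. unfold AbsRing_ball in Hb.
      unfold abs, minus, plus, opp in Hb; simpl in Hb. change (Rabs (f y - f x) < e') in Hb. lra. }
  assert (Hpiece : forall lam c d', 0 < lam -> a <= c -> c <= d' -> d' <= b -> d' - c < d ->
     Rabs (RInt (fun u => f u * cos (lam * u)) c d') <= (d' - c) * e' + M * (2 / lam)).
  { intros lam c d' Hl Hac Hcd Hdb Hdd.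
    assert (Hex1 : ex_RInt (fun u => (f u - f c) * cos (lam * u)) c d').
    { apply ex_RInt_cont. lra. intros x Hx. apply cont_mult. apply cont_minus. apply Hc; lra. apply cont_const. apply cont_cos_lin. }
    assert (Hex2 : ex_RInt (fun u => f c * cos (lam * u)) c d').
    { apply ex_RInt_cont. lra. intros x Hx. apply cont_mult. apply cont_const. apply cont_cos_lin. }
    rewrite (RInt_ext _ (fun u => (f u - f c) * cos (lam * u) + f c * cos (lam * u))).
    2:{ intros x _. assert (T: forall p q r : R, p * r = (p - q) * r + q * r) by (intros; ring). apply T. }
    rewrite RInt_plus' by assumption.
    eapply Rle_trans. apply Rabs_triang. apply Rplus_le_compat.
    - apply abs_RInt_le_const. lra. exact Hex1. intros t Ht. rewrite Rabs_mult.
      pose proof (COS_bound (lam * t)). assert (Rabs (cos (lam*t)) <= 1) by (apply Rabs_le; lra).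
      assert (Rabs (f t - f c) <= e'). { apply Hu; try lra. rewrite Rabs_right; lra. }
      pose proof (Rabs_pos (f t - f c)). pose proof (Rabs_pos (cos (lam*t))). nra.
    - rewrite RInt_scal'. rewrite Rabs_mult. apply Rmult_le_compat. apply Rabs_pos. apply Rabs_pos.
      apply HM. lra. now apply int_cos.
      apply ex_RInt_cont. lra. intros; apply cont_cos_lin. }
  destruct (archimed_cor1 (d / (b - a + 1))) as [N [HN HN0]].
  { apply Rdiv_lt_0_compat; lra. }
  assert (HNp : 0 < INR N) by (apply lt_0_INR; lia).
  set (h := (b - a) / INR N).
  assert (Hh0 : 0 <= h) by (apply Rdiv_le_0_compat; lra).
  assert (Hhd : h < d).
  { unfold h. apply Rle_lt_trans with ((b - a + 1) / INR N).
    unfold Rdiv; apply Rmult_le_compat_r. left; apply Rinv_0_lt_compat; lra. lra.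
    apply Rmult_lt_reg_r with (/ (b - a + 1)). apply Rinv_0_lt_compat; lra.
    replace ((b - a + 1) / INR N * / (b - a + 1)) with (/ INR N) by (field; lra). exact HN. }
  assert (Hind : forall lam, 0 < lam -> forall m : nat, forall c, a <= c -> c + INR m * h <= b ->
     Rabs (RInt (fun u => f u * cos (lam * u)) c (c + INR m * h)) <= INR m * (h * e' + M * (2 / lam))).
  { intros lam Hl. induction m as [|m IH]; intros c Hac Hcb.
    - simpl. replace (c + 0 * h) with c by ring. rewrite RInt_point. change (Rabs 0 <= 0 * (h * e' + M * (2 / lam))). rewrite Rabs_R0. lra.
    - rewrite S_INR in *. 
      assert (Hm0 : 0 <= INR m) by apply pos_INR.
      rewrite <- (Chasles _ c (c + h) (c + (INR m + 1) * h)).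
      2:{ apply ex_RInt_cont. lra. intros x Hx. apply cont_mult. apply Hc. nra. apply cont_cos_lin. }
      2:{ apply ex_RInt_cont. nra. intros x Hx. apply cont_mult. apply Hc. nra. apply cont_cos_lin. }
      eapply Rle_trans. apply Rabs_triang.
      replace (c + (INR m + 1) * h) with ((c + h) + INR m * h) by ring.
      specialize (IH (c + h) ltac:(lra) ltac:(nra)).
      assert (Rabs (RInt (fun u => f u * cos (lam * u)) c (c + h)) <= (c + h - c) * e' + M * (2 / lam)).
      { apply Hpiece; try lra. nra. }
      replace (c + h - c) with h in H by ring. nra. }
  set (L := 4 * INR N * (M + 1) / eps).
  assert (HL : 0 < L) by (unfold L; apply Rdiv_lt_0_compat; nra).
  exists L. split. exact HL. intros lam Hlam.
  assert (Hl : 0 < lam) by lra.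
  specialize (Hind lam Hl N a ltac:(lra)).
  assert (Hb' : a + INR N * h = b) by (unfold h; field; lra).
  rewrite Hb' in Hind. specialize (Hind ltac:(lra)).
  eapply Rle_lt_trans. exact Hind.
  replace (INR N * (h * e' + M * (2 / lam))) with ((b - a) * e' + 2 * INR N * M / lam).
  2:{ unfold h. field. lra. }
  assert ((b - a) * e' < eps / 2).
  { unfold e'. apply Rmult_lt_reg_r with (2 * (b - a + 1)). lra. field_simplify; nra. }
  assert (2 * INR N * M / lam <= eps / 2 * (M / (M + 1))).
  { apply Rmult_le_reg_r with lam. lra. unfold Rdiv at 1. rewrite Rmult_assoc, Rinv_l, Rmult_1_r by lra.
    unfold L in Hlam. 
    assert (eps / 2 * (M / (M + 1)) * lam >= eps / 2 * (M / (M + 1)) * (4 * INR N * (M + 1) / eps)).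
    { apply Rle_ge. apply Rmult_le_compat_l. apply Rmult_le_pos. lra. apply Rdiv_le_0_compat; lra. exact Hlam. }
    replace (eps / 2 * (M / (M + 1)) * (4 * INR N * (M + 1) / eps)) with (2 * INR N * M) in H0 by (field; lra).
    lra. }
  assert (eps / 2 * (M / (M + 1)) < eps / 2).
  { assert (M / (M+1) < 1). { apply Rmult_lt_reg_r with (M+1). lra. field_simplify; lra. } nra. }
  lra.
Qed.


Lemma imp_exists01 (f : R -> R) M p : 0 < p -> cont01 f ->
  (forall x, 0 < x <= 1/2 -> Rabs (f x) <= M * Rpower x (p-1)) ->
  (forall x, 1/2 <= x < 1 -> Rabs (f x) <= M * Rpower (1-x) (p-1)) ->
  {l | imp01 f l /\ forall a b, 0 < a <= 1/2 -> 1/2 <= b < 1 ->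
       Rabs (l - RInt f a b) <= M * Rpower a p / p + M * Rpower (1-b) p / p}.
Proof.
  intros Hp Hc H0 H1. destruct (imp_exists f M p Hp Hc H0 H1) as [l Hl].
  exists l. split; auto. apply (qimp_imp01 f (M/p) p l Hp Hc).
  intros a b Ha Hb. specialize (Hl a b Ha Hb). unfold Rdiv in *. lra.
Qed.

Lemma RL_imp (f : R -> R) M p : 0 < p -> cont01 f ->
  (forall x, 0 < x <= 1/2 -> Rabs (f x) <= M * Rpower x (p-1)) ->
  (forall x, 1/2 <= x < 1 -> Rabs (f x) <= M * Rpower (1-x) (p-1)) ->
  { L : nat -> R | (forall n, imp01 (fun u => f u * cos (2 * PI * INR n * u)) (L n)) /\ Un_cv L 0 }.
Proof.
  intros Hp Hc H0 H1.
  assert (Hcn : forall n, cont01 (fun u => f u * cos (2 * PI * INR n * u))).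
  { intros n x Hx. apply cont_mult. now apply Hc. apply cont_cos_lin. }
  assert (Hbd : forall n x, Rabs (f x * cos (2 * PI * INR n * x)) <= Rabs (f x)).
  { intros n x. rewrite Rabs_mult. pose proof (COS_bound (2 * PI * INR n * x)).
    assert (Rabs (cos (2 * PI * INR n * x)) <= 1) by (apply Rabs_le; lra).
    pose proof (Rabs_pos (f x)). pose proof (Rabs_pos (cos (2 * PI * INR n * x))). nra. }
  set (F := fun n => imp_exists01 (fun u => f u * cos (2 * PI * INR n * u)) M p Hp (Hcn n)
      (fun x Hx => Rle_trans _ _ _ (Hbd n x) (H0 x Hx))
      (fun x Hx => Rle_trans _ _ _ (Hbd n x) (H1 x Hx))).
  exists (fun n => proj1_sig (F n)). split.
  - intros n. exact (proj1 (proj2_sig (F n))).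
  - intros eps He.
    assert (HM : 0 <= M).
    { pose proof (H0 (1/2) ltac:(lra)). pose proof (Rabs_pos (f (1/2))). pose proof (rpow_pos (1/2) (p-1)). nra. }
    destruct (rpow_small p (eps * p / (4 * (M + 1))) Hp) as [d [Hd Hd']].
    { apply Rdiv_lt_0_compat. nra. lra. }
    set (a := Rmin d 1 / 2).
    assert (Ha : 0 < a <= 1/2). { unfold a. pose proof (Rmin_r d 1). assert (0 < Rmin d 1) by (apply Rmin_pos; lra). lra. }
    assert (Had : a < d). { unfold a. pose proof (Rmin_l d 1). assert (0 < Rmin d 1) by (apply Rmin_pos; lra). lra. }
    destruct (RL_compact f a (1 - a) ltac:(lra)) with (eps := eps / 2) as [Lam [HLam HLam']].
    { intros x Hx. apply Hc; lra. }
    lra.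
    destruct (archimed_cor1 (2 * PI / Lam)) as [N [HN HN0]].
    { apply Rdiv_lt_0_compat. pose proof PI_RGT_0; lra. lra. }
    exists N. intros n Hn. unfold R_dist. rewrite Rminus_0_r.
    destruct (proj2_sig (F n)) as [_ Hq].
    specialize (Hq a (1 - a) Ha ltac:(lra)).
    replace (1 - (1 - a)) with a in Hq by ring.
    assert (Hlam : Lam <= 2 * PI * INR n).
    { apply le_INR in Hn. assert (0 < INR N) by (apply lt_0_INR; lia).
      assert (Lam * / INR N < 2 * PI).
      { apply Rmult_lt_reg_r with (/ Lam * INR N). apply Rmult_lt_0_compat. now apply Rinv_0_lt_compat. lra.
        replace (Lam * / INR N * (/ Lam * INR N)) with 1 by (field; lra).
        replace (2 * PI * (/ Lam * INR N)) with (2 * PI / Lam * INR N) by (field; lra).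
        apply Rmult_lt_reg_r with (/ INR N). now apply Rinv_0_lt_compat.
        replace (2 * PI / Lam * INR N * / INR N) with (2 * PI / Lam) by (field; lra). lra. }
      assert (Lam < 2 * PI * INR N).
      { apply Rmult_lt_reg_r with (/ INR N). now apply Rinv_0_lt_compat.
        replace (2 * PI * INR N * / INR N) with (2 * PI) by (field; lra). exact H2. }
      pose proof PI_RGT_0. nra. }
    specialize (HLam' _ Hlam).
    pose proof (Hd' a ltac:(lra)).
    assert (M * Rpower a p / p + M * Rpower a p / p < eps / 2).
    { assert (M * Rpower a p / p <= M * (eps * p / (4 * (M + 1))) / p).
      { unfold Rdiv. apply Rmult_le_compat_r. left; apply Rinv_0_lt_compat; lra.
        apply Rmult_le_compat_l; lra. }
      assert (M * (eps * p / (4 * (M + 1))) / p = eps / 4 * (M / (M + 1))) by (field; lra).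
      assert (M / (M+1) < 1). { apply Rmult_lt_reg_r with (M+1). lra. field_simplify; lra. }
      assert (0 <= M / (M+1)) by (apply Rdiv_le_0_compat; lra).
      nra. }
    set (l := proj1_sig (F n)) in *.
    replace l with ((l - RInt (fun u => f u * cos (2 * PI * INR n * u)) a (1 - a)) + RInt (fun u => f u * cos (2 * PI * INR n * u)) a (1 - a)) by ring.
    eapply Rle_lt_trans. apply Rabs_triang. lra.
Qed.


Fixpoint Ssin (n : nat) (u : R) : R :=
  match n with O => 0 | S m => Ssin m u + sin (2 * PI * INR (S m) * u) end.

Fixpoint Hs (n : nat) : R :=
  match n with O => 0 | S m => Hs m + / (2 * PI * INR (S m)) end.

Lemma trig_id n u : sin (PI * u) <> 0 ->
  (1 - cos (2 * PI * INR n * u)) * cot (PI * u) = 2 * Ssin n u - sin (2 * PI * INR n * u).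
Proof.
  intros Hs0. induction n as [|n IH].
  - simpl. replace (2 * PI * 0 * u) with 0 by ring. rewrite cos_0, sin_0. ring.
  - change (Ssin (S n) u) with (Ssin n u + sin (2 * PI * INR (S n) * u)). rewrite S_INR.
    set (A := 2 * PI * INR n * u) in *. set (x := PI * u) in *.
    replace (2 * PI * (INR n + 1) * u) with (A + 2 * x) by (unfold A, x; ring).
    assert (HS : Ssin n u = ((1 - cos A) * cot x + sin A) / 2) by lra.
    rewrite HS. unfold cot. rewrite cos_plus, sin_plus, cos_2a_sin, sin_2a.
    assert (Hc2 : cos x * cos x = 1 - sin x * sin x) by (pose proof (sin2_cos2 x); unfold Rsqr in *; lra).
    field_simplify; auto. f_equal.
    replace (cos x ^ 2) with (cos x * cos x) by ring. rewrite Hc2. ring.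
Qed.

Lemma cont_plus (f g : R -> R) x : continuous f x -> continuous g x -> continuous (fun u => f u + g u) x.
Proof. intros. apply (continuous_plus f g x); auto. Qed.

Lemma cont_sin_lin lam x : continuous (fun u => sin (lam * u)) x.
Proof. apply exd_cont. auto_derive. auto. Qed.

Lemma cont_Ssin n x : continuous (Ssin n) x.
Proof.
  induction n as [|n IH].
  - apply (cont_const 0 x).
  - apply (cont_plus (Ssin n) (fun u => sin (2 * PI * INR (S n) * u))). exact IH. apply cont_sin_lin.
Qed.

Lemma sin_2PIm m : sin (2 * PI * INR m) = 0.
Proof. pose proof (sin_period 0 m). rewrite Rplus_0_l, sin_0 in H. rewrite <- H. f_equal. ring. Qed.

Lemma cos_2PIm m : cos (2 * PI * INR m) = 1.
Proof. pose proof (cos_period 0 m). rewrite Rplus_0_l, cos_0 in H. rewrite <- H. f_equal. ring. Qed.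

Definition Bv (n : nat) : R := match n with O => 0 | S _ => / (2 * PI * INR n) end.

Lemma int_lin_sin m : is_RInt (fun u => (1 - u) * sin (2 * PI * INR m * u)) 0 1 (Bv m).
Proof.
  destruct m as [|m].
  - apply (is_RInt_ext (fun _ => 0)). intros x _. simpl. replace (2 * PI * 0 * x) with 0 by ring. rewrite sin_0. ring.
    replace (Bv 0) with (scal (1 - 0) (0:R)). apply (@is_RInt_const R_NormedModule). simpl. unfold scal; simpl. unfold mult; simpl. ring.
  - set (w := 2 * PI * INR (S m)).
    assert (Hw : 0 < w). { unfold w. pose proof PI_RGT_0. pose proof (lt_0_INR (S m) ltac:(lia)). nra. }
    assert (H := is_RInt_derive (fun u => - (1 - u) * cos (w * u) / w - sin (w * u) / (w * w))
                  (fun u => (1 - u) * sin (w * u)) 0 1).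
    replace (Bv (S m)) with (minus (- (1 - 1) * cos (w * 1) / w - sin (w * 1) / (w * w))
                                  (- (1 - 0) * cos (w * 0) / w - sin (w * 0) / (w * w))).
    + apply H.
      * intros x _. auto_derive. auto. field. lra.
      * intros x _. apply cont_mult. apply exd_cont; auto_derive; auto. apply cont_sin_lin.
    + change (Bv (S m)) with (/ w). unfold minus, plus, opp; simpl. rewrite Rmult_1_r, Rmult_0_r, cos_0, sin_0.
      assert (Hsw : sin w = 0) by (unfold w; apply sin_2PIm). rewrite Hsw. field. lra.
Qed.

Lemma int_Ssin n : is_RInt (fun u => (1 - u) * Ssin n u) 0 1 (Hs n).
Proof.
  induction n as [|n IH].
  - apply (is_RInt_ext (fun _ => 0)). intros x _. simpl. ring.
    replace (Hs 0) with (scal (1 - 0) (0:R)). apply (@is_RInt_const R_NormedModule). simpl. unfold scal; simpl. unfold mult; simpl. ring.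
  - apply (is_RInt_ext (fun u => (1 - u) * Ssin n u + (1 - u) * sin (2 * PI * INR (S n) * u))).
    { intros x _. change (Ssin (S n) x) with (Ssin n x + sin (2 * PI * INR (S n) * x)). req. ring. }
    change (Hs (S n)) with (plus (Hs n) (/ (2 * PI * INR (S n)))).
    apply (@is_RInt_plus R_NormedModule). exact IH.
    exact (int_lin_sin (S n)).
Qed.

Lemma imp01_proper (T : R -> R) v : (forall x, continuous T x) -> is_RInt T 0 1 v -> imp01 T v.
Proof.
  intros Hc Hv.
  destruct (continuity_ab_maj (fun x => Rabs (T x)) 0 1 ltac:(lra)) as [xm [HM Hxm]].
  { intros x Hx. apply continuity_pt_filterlim. apply continuous_Rabs_comp. now apply Hc. }
  set (K := Rabs (T xm)). assert (HK : 0 <= K) by apply Rabs_pos.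
  assert (Hex : forall a b, a <= b -> ex_RInt T a b) by (intros; apply ex_RInt_cont; auto).
  split.
  - intros a b Ha Hab Hb. apply Hex; lra.
  - intros eps He. exists (Rmin (eps / (2 * (K + 1))) (1/2)). split.
    { apply Rmin_pos. apply Rdiv_lt_0_compat; lra. lra. }
    intros a b Ha Had Hbd Hb Hab.
    pose proof (Rmin_l (eps / (2 * (K + 1))) (1/2)). pose proof (Rmin_r (eps / (2 * (K + 1))) (1/2)).
    rewrite <- (is_RInt_unique _ _ _ _ Hv).
    rewrite <- (Chasles T 0 a 1) by (apply Hex; lra).
    rewrite <- (Chasles T a b 1) by (apply Hex; lra).
    assert (H1 : Rabs (RInt T 0 a) <= (a - 0) * K).
    { apply abs_RInt_le_const. lra. apply Hex; lra. intros t Ht. apply HM. lra. }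
    assert (H2 : Rabs (RInt T b 1) <= (1 - b) * K).
    { apply abs_RInt_le_const. lra. apply Hex; lra. intros t Ht. apply HM. lra. }
    replace (RInt T a b - (RInt T 0 a + (RInt T a b + RInt T b 1))) with (- (RInt T 0 a + RInt T b 1)) by ring.
    rewrite Rabs_Ropp. eapply Rle_lt_trans. apply Rabs_triang.
    set (e := eps / (2 * (K + 1))) in *.
    assert ((a - 0) * K <= e * K) by nra. assert ((1 - b) * K <= e * K) by nra.
    assert (e * K < eps / 2). { unfold e. apply Rmult_lt_reg_r with (2 * (K + 1)). lra. field_simplify; nra. }
    lra.
Qed.

Lemma E_imp n : imp01 (fun u => (1 - u) * (1 - cos (2 * PI * INR n * u)) * cot (PI * u)) (2 * Hs n - Bv n).
Proof.
  apply (imp01_ext (fun u => 2 * ((1 - u) * Ssin n u) - (1 - u) * sin (2 * PI * INR n * u))).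
  { intros x Hx. symmetry. rewrite Rmult_assoc, trig_id. ring.
    apply Rgt_not_eq. apply sin_gt_0. pose proof PI_RGT_0; nra. pose proof PI_RGT_0; nra. }
  apply imp01_proper.
  - intros x. apply cont_minus. apply (cont_mult (fun _ => 2)). apply cont_const.
    apply cont_mult. apply exd_cont; auto_derive; auto. apply cont_Ssin.
    apply cont_mult. apply exd_cont; auto_derive; auto. apply cont_sin_lin.
  - apply (@is_RInt_minus R_NormedModule).
    apply (is_RInt_scal _ _ _ 2 (Hs n)). apply int_Ssin.
    apply int_lin_sin.
Qed.


Lemma harmonic_Hs n : harmonic (S n) = 2 * PI * Hs (S n).
Proof.
  unfold harmonic, sum_f. replace (S n - 1)%nat with n by lia.
  pose proof PI_RGT_0.
  induction n as [|n IH].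
  - simpl. change (Hs 1) with (0 + / (2 * PI * INR 1)). simpl. field. lra.
  - rewrite tech5, IH. change (Hs (S (S n))) with (Hs (S n) + / (2 * PI * INR (S (S n)))).
    replace (S n + 1)%nat with (S (S n)) by lia.
    assert (0 < INR (S (S n))) by (apply lt_0_INR; lia).
    field. split; lra.
Qed.

Lemma cont_cotpi x : 0 < x < 1 -> continuous (fun u => cot (PI * u)) x.
Proof.
  intros Hx. unfold cot. apply exd_cont. auto_derive.
  apply Rgt_not_eq. apply sin_gt_0. pose proof PI_RGT_0; nra. pose proof PI_RGT_0; nra.
Qed.

Definition hfun (P : R -> R) (c : R) (u : R) : R := (P (1 - u) - c * (1 - u)) * cot (PI * u).
Definition pp (kr : R) := Rmin kr 1.
Definition MM (c C : R) := 2 * Rabs C + 2 * Rabs c + 2.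
Lemma hfun_cont (P : R -> R) (c : R) (HPc : forall x, 0 < x -> continuous P x) : cont01 (hfun P c).
Proof.
  intros x Hx. unfold hfun. apply (cont_mult (fun u => P (1 - u) - c * (1 - u)) (fun u => cot (PI * u))).
  - apply (cont_minus (fun u => P (1 - u)) (fun u => c * (1 - u))).
    + apply (cont_refl P). apply HPc. lra.
    + apply exd_cont. auto_derive. auto.
  - now apply cont_cotpi.
Qed.


Lemma pp_pos kr (hk : 0 < kr) : 0 < pp kr.
Proof. unfold pp. apply Rmin_pos; lra. Qed.

Lemma hfun_b0 (kr : R) (hk : 0 < kr) (P : R -> R) (c C : R)
  (HPc : forall x, 0 < x -> continuous P x)
  (HPb : forall x, 0 < x < 1 -> Rabs (P x) <= Rpower x kr)
  (HP1 : forall x, 1/2 <= x < 1 -> Rabs (P x - c) <= C * (1 - x)) x : 0 < x <= 1/2 -> Rabs (hfun P c x) <= MM c C * Rpower x (pp kr - 1).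
Proof.
  intros Hx. unfold hfun. rewrite Rabs_mult.
  pose proof (cot_bound0 x Hx).
  assert (H1 : Rabs (P (1 - x) - c * (1 - x)) <= (Rabs C + Rabs c) * x).
  { replace (P (1 - x) - c * (1 - x)) with ((P (1-x) - c) + c * x) by ring.
    eapply Rle_trans. apply Rabs_triang. rewrite Rabs_mult.
    pose proof (HP1 (1 - x) ltac:(lra)). replace (1 - (1 - x)) with x in H0 by ring.
    pose proof (Rle_abs C). rewrite (Rabs_right x) by lra. nra. }
  assert (H2 : 1 <= Rpower x (pp kr - 1)).
  { apply rpow_ge1. lra. unfold pp. pose proof (Rmin_r kr 1). lra. }
  pose proof (Rabs_pos (cot (PI * x))). pose proof (Rabs_pos (P (1 - x) - c * (1 - x))).
  pose proof (Rabs_pos C). pose proof (Rabs_pos c).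
  assert (H6 : Rabs (P (1 - x) - c * (1 - x)) * Rabs (cot (PI * x)) <= (Rabs C + Rabs c) * x * (2 / x)) by
    (apply Rmult_le_compat; auto).
  replace ((Rabs C + Rabs c) * x * (2 / x)) with (2 * (Rabs C + Rabs c)) in H6 by (field; lra).
  unfold MM. nra.
Qed.

Lemma hfun_b1 (kr : R) (hk : 0 < kr) (P : R -> R) (c C : R)
  (HPc : forall x, 0 < x -> continuous P x)
  (HPb : forall x, 0 < x < 1 -> Rabs (P x) <= Rpower x kr)
  (HP1 : forall x, 1/2 <= x < 1 -> Rabs (P x - c) <= C * (1 - x)) x : 1/2 <= x < 1 -> Rabs (hfun P c x) <= MM c C * Rpower (1 - x) (pp kr - 1).
Proof.
  intros Hx. unfold hfun. rewrite Rabs_mult.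
  pose proof (cot_bound1 x Hx).
  assert (H1 : Rabs (P (1 - x) - c * (1 - x)) <= Rpower (1 - x) kr + Rabs c * (1 - x)).
  { eapply Rle_trans. apply Rabs_triang. rewrite Rabs_Ropp, Rabs_mult, (Rabs_right (1 - x)) by lra.
    pose proof (HPb (1 - x) ltac:(lra)). lra. }
  assert (Hk : Rpower (1 - x) kr = Rpower (1 - x) (kr - 1) * (1 - x)).
  { replace kr with ((kr - 1) + 1) at 1 by ring. rewrite Rpower_plus, Rpower_1 by lra. ring. }
  assert (H2 : 1 <= Rpower (1 - x) (pp kr - 1)).
  { apply rpow_ge1. lra. unfold pp. pose proof (Rmin_r kr 1). lra. }
  assert (H3 : Rpower (1 - x) (kr - 1) <= Rpower (1 - x) (pp kr - 1)).
  { apply rpow_exp_anti. lra. unfold pp. pose proof (Rmin_l kr 1). lra. }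
  pose proof (Rabs_pos (cot (PI * x))). pose proof (Rabs_pos (P (1 - x) - c * (1 - x))).
  pose proof (Rabs_pos C). pose proof (Rabs_pos c). pose proof (rpow_pos (1 - x) (kr - 1)).
  assert (H9 : Rabs (P (1 - x) - c * (1 - x)) * Rabs (cot (PI * x)) <= (Rpower (1 - x) kr + Rabs c * (1 - x)) * (2 / (1 - x))) by
    (apply Rmult_le_compat; auto).
  rewrite Hk in H9.
  replace ((Rpower (1 - x) (kr - 1) * (1 - x) + Rabs c * (1 - x)) * (2 / (1 - x))) with
     (2 * Rpower (1 - x) (kr - 1) + 2 * Rabs c) in H9 by (field; lra).
  unfold MM. nra.
Qed.

Lemma generic_main (kr : R) (hk : 0 < kr) (P : R -> R) (c C : R)
  (HPc : forall x, 0 < x -> continuous P x)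
  (HPb : forall x, 0 < x < 1 -> Rabs (P x) <= Rpower x kr)
  (HP1 : forall x, 1/2 <= x < 1 -> Rabs (P x - c) <= C * (1 - x)) : { l | exists L : nat -> R,
   (forall n, imp01 (fun u => P (1 - u) * (1 - cos (2 * PI * INR n * u)) * cot (PI * u)) (l - L n + c * (2 * Hs n - Bv n))) /\
   imp01 (fun u => (P u - c * u) * cot (PI * u)) (- l) /\ Un_cv L 0 }.
Proof.
  destruct (imp_exists01 (hfun P c) (MM c C) (pp kr) (pp_pos kr hk) (hfun_cont P c HPc) (hfun_b0 kr hk P c C HPc HPb HP1) (hfun_b1 kr hk P c C HPc HPb HP1)) as [l [Hl _]].
  destruct (RL_imp (hfun P c) (MM c C) (pp kr) (pp_pos kr hk) (hfun_cont P c HPc) (hfun_b0 kr hk P c C HPc HPb HP1) (hfun_b1 kr hk P c C HPc HPb HP1)) as [L [HL HLc]].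
  exists l, L. split; [|split].
  - intros n.
    replace (l - L n + c * (2 * Hs n - Bv n)) with ((l + -1 * L n) + c * (2 * Hs n - Bv n)) by ring.
    apply (imp01_ext (fun u => (hfun P c u + -1 * (hfun P c u * cos (2 * PI * INR n * u))) +
                        c * ((1 - u) * (1 - cos (2 * PI * INR n * u)) * cot (PI * u)))).
    { intros x Hx. unfold hfun. ring. }
    apply imp01_plus. apply imp01_plus. exact Hl. apply imp01_scal. apply HL.
    apply imp01_scal. apply E_imp.
  - replace (- l) with (-1 * l) by ring.
    apply (imp01_ext (fun u => -1 * hfun P c (1 - u))).
    { intros x Hx. unfold hfun. replace (1 - (1 - x)) with x by ring.
      replace (PI * (1 - x)) with (PI - PI * x) by ring. unfold cot.
      rewrite sin_PI_x, Rtrigo_facts.cos_pi_minus. unfold Rdiv. ring. }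
    apply imp01_scal. apply imp01_refl. apply hfun_cont. exact HPc. exact Hl.
  - exact HLc.
Qed.




Lemma Un_cv_const l : Un_cv (fun _ => l) l.
Proof. intros eps He. exists 0%nat. intros. unfold R_dist. rewrite Rminus_eq_0, Rabs_R0. lra. Qed.

Lemma Un_cv_ext_loc (u v : nat -> R) l : (forall n, (1 <= n)%nat -> u n = v n) -> Un_cv u l -> Un_cv v l.
Proof.
  intros He Hu eps Heps. destruct (Hu eps Heps) as [N HN]. exists (max N 1). intros n Hn.
  rewrite <- He by lia. apply HN. lia.
Qed.

Lemma Bv_cv : Un_cv Bv 0.
Proof.
  intros eps He. pose proof PI_RGT_0.
  destruct (archimed_cor1 (2 * PI * eps)) as [N [HN HN0]]. nra.
  exists N. intros n Hn. destruct n as [|m]. lia.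
  unfold R_dist. rewrite Rminus_0_r. change (Bv (S m)) with (/ (2 * PI * INR (S m))).
  assert (0 < INR N) by (apply lt_0_INR; lia).
  assert (INR N <= INR (S m)) by (apply le_INR; lia).
  rewrite Rabs_right.
  2:{ apply Rle_ge. left. apply Rinv_0_lt_compat. nra. }
  apply Rle_lt_trans with (/ (2 * PI * INR N)).
  apply Rinv_le_contravar; nra.
  rewrite Rinv_mult. apply Rmult_lt_reg_l with (2 * PI). nra.
  replace (2 * PI * (/ (2 * PI) * / INR N)) with (/ INR N) by (field; lra). nra.
Qed.

Lemma cpow_re_cont kr ki x : 0 < x -> continuous (fun t => cpow_re t kr ki) x.
Proof. intros. unfold cpow_re, Rpower. apply exd_cont. auto_derive. lra. Qed.

Lemma cpow_im_cont kr ki x : 0 < x -> continuous (fun t => cpow_im t kr ki) x.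
Proof. intros. unfold cpow_im, Rpower. apply exd_cont. auto_derive. lra. Qed.

Lemma cpow_re_b kr ki x : 0 < x < 1 -> Rabs (cpow_re x kr ki) <= Rpower x kr.
Proof. intros. unfold cpow_re. rewrite Rabs_mult, (Rabs_right (Rpower x kr)) by (left; apply rpow_pos).
  pose proof (COS_bound (ki * ln x)). assert (Rabs (cos (ki * ln x)) <= 1) by (apply Rabs_le; lra).
  pose proof (rpow_pos x kr). pose proof (Rabs_pos (cos (ki * ln x))). nra. Qed.

Lemma cpow_im_b kr ki x : 0 < x < 1 -> Rabs (cpow_im x kr ki) <= Rpower x kr.
Proof. intros. unfold cpow_im. rewrite Rabs_mult, (Rabs_right (Rpower x kr)) by (left; apply rpow_pos).
  pose proof (SIN_bound (ki * ln x)). assert (Rabs (sin (ki * ln x)) <= 1) by (apply Rabs_le; lra).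
  pose proof (rpow_pos x kr). pose proof (Rabs_pos (sin (ki * ln x))). nra. Qed.

Lemma cpow_re_1 kr ki x : 0 < kr -> 1/2 <= x < 1 -> Rabs (cpow_re x kr ki - 1) <= (2 * Rabs ki + 2 * kr) * (1 - x).
Proof.
  intros Hk Hx. unfold cpow_re.
  replace (Rpower x kr * cos (ki * ln x) - 1) with (Rpower x kr * (cos (ki * ln x) - 1) + (Rpower x kr - 1)) by ring.
  eapply Rle_trans. apply Rabs_triang. rewrite Rabs_mult.
  pose proof (rpow_near1 x kr ltac:(lra) ltac:(lra)).
  pose proof (Rabs_cos1_le (ki * ln x)). rewrite Rabs_mult in H0.
  pose proof (ln_near1 x ltac:(lra)).
  assert (Hr : Rabs (Rpower x kr) <= 1). { rewrite Rabs_right. apply rpow_le1; lra. left; apply rpow_pos. }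
  pose proof (Rabs_pos ki). pose proof (Rabs_pos (ln x)). pose proof (Rabs_pos (Rpower x kr)).
  pose proof (Rabs_pos (cos (ki * ln x) - 1)).
  assert (Rabs (Rpower x kr) * Rabs (cos (ki * ln x) - 1) <= 1 * (Rabs ki * (2 * (1 - x)))).
  { apply Rmult_le_compat; auto. eapply Rle_trans. exact H0. apply Rmult_le_compat_l; auto. }
  nra.
Qed.

Lemma cpow_im_1 kr ki x : 0 < kr -> 1/2 <= x < 1 -> Rabs (cpow_im x kr ki - 0) <= (2 * Rabs ki) * (1 - x).
Proof.
  intros Hk Hx. unfold cpow_im. rewrite Rminus_0_r, Rabs_mult.
  pose proof (Rabs_sin_le (ki * ln x)). rewrite Rabs_mult in H.
  pose proof (ln_near1 x ltac:(lra)).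
  assert (Hr : Rabs (Rpower x kr) <= 1). { rewrite Rabs_right. apply rpow_le1; lra. left; apply rpow_pos. }
  pose proof (Rabs_pos ki). pose proof (Rabs_pos (ln x)). pose proof (Rabs_pos (Rpower x kr)).
  pose proof (Rabs_pos (sin (ki * ln x))).
  assert (Rabs (Rpower x kr) * Rabs (sin (ki * ln x)) <= 1 * (Rabs ki * (2 * (1 - x)))).
  { apply Rmult_le_compat; auto. eapply Rle_trans. exact H. apply Rmult_le_compat_l; auto. }
  nra.
Qed.

Theorem mainTheorem5 (kr ki : R) (hk : 0 < kr) (g : R) (hg : is_euler_gamma g) :
  exists (Ire Iim : nat -> R) (Jre Jim : R),
    (forall n : nat, improper_int01 (F_re kr ki n) (Ire n) /\
                     improper_int01 (F_im kr ki n) (Iim n)) /\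
    improper_int01 (G_re kr ki) Jre /\
    improper_int01 (G_im kr ki) Jim /\
    Un_cv (fun n => Ire n - ((g + ln (INR n)) / PI - Jre)) 0 /\
    Un_cv (fun n => Iim n - (0 - Jim)) 0.
Proof.
  assert (HP1r : forall x, 1/2 <= x < 1 -> Rabs (cpow_re x kr ki - 1) <= (2 * Rabs ki + 2 * kr) * (1 - x))
    by (intros; now apply cpow_re_1).
  assert (HP1i : forall x, 1/2 <= x < 1 -> Rabs (cpow_im x kr ki - 0) <= (2 * Rabs ki) * (1 - x))
    by (intros; now apply cpow_im_1).
  destruct (generic_main kr hk (fun x => cpow_re x kr ki) 1 (2 * Rabs ki + 2 * kr)
              (cpow_re_cont kr ki) (cpow_re_b kr ki) HP1r) as [lr [Lr [HFr [HGr HLr]]]].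
  destruct (generic_main kr hk (fun x => cpow_im x kr ki) 0 (2 * Rabs ki)
              (cpow_im_cont kr ki) (cpow_im_b kr ki) HP1i) as [li [Li [HFi [HGi HLi]]]].
  exists (fun n => lr - Lr n + 1 * (2 * Hs n - Bv n)), (fun n => li - Li n + 0 * (2 * Hs n - Bv n)), (- lr), (- li).
  split; [|split; [|split; [|split]]].
  - intros n. split; apply imp01_improper. apply (HFr n). apply (HFi n).
  - apply imp01_improper. apply (imp01_ext (fun u => (cpow_re u kr ki - 1 * u) * cot (PI * u))).
    intros x _. unfold G_re. ring. exact HGr.
  - apply imp01_improper. apply (imp01_ext (fun u => (cpow_im u kr ki - 0 * u) * cot (PI * u))).
    intros x _. unfold G_im. ring. exact HGi.
  - apply (Un_cv_ext_loc (fun n => (- Lr n + - Bv n) + (harmonic n - ln (INR n) - g) * / PI)).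
    + intros n Hn. destruct n as [|m]. lia. rewrite harmonic_Hs. field. pose proof PI_RGT_0; lra.
    + replace 0 with ((- 0 + - 0) + (g - g) * / PI) by ring.
      apply CV_plus. apply CV_plus. apply (CV_opp Lr 0 HLr). apply (CV_opp Bv 0 Bv_cv).
      apply CV_mult. apply CV_minus. exact hg. apply Un_cv_const. apply Un_cv_const.
  - apply (Un_cv_ext_loc (fun n => - Li n)).
    + intros n _. ring.
    + replace 0 with (- 0) by ring. apply (CV_opp Li 0 HLi).
Qed.
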